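(* Let $\Gamma$ be a locally finite vertex-transitive weighted graph with distinguished vertex $e$. If vertices $x,y$ satisfy $\mathbb{P}_e[T_x<\infty]>\mathbb{P}_e[T_y<\infty]$, then they also satisfy $\mathbb{P}_e[\,T_x<T_y\mid\min\{T_x,T_y\}<\infty\,]>1/2$. If the random walk on $\Gamma$ is transient then these two conditions are equivalent.
   Context: Weighted graph: undirected, no loops or multiple edges, weights $\omega_{xy}=\omega_{yx}>0$, $\deg x=\sum_{y\sim x}\omega_{xy}$; vertex-transitive means the group of weight-preserving automorphisms acts transitively on vertices. $(X_t)$ is the random walk stepping from $z$ to neighbour $w$ with probability $\omega_{zw}/\deg z$; $\mathbb{P}_g$ denotes its law with $X_0=g$; $T_z=\inf\{t\ge0:X_t=z\}$. The walk is transient if the probability of ever returning (at a time $t\ge1$) to the starting vertex is less than $1$. *)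

(* Defs.v *)
From mathcomp Require Import all_boot all_order all_algebra.
From mathcomp Require Import all_classical all_reals all_analysis.
Set Implicit Arguments. Unset Strict Implicit. Unset Printing Implicit Defensive.
Import Order.TTheory GRing.Theory Num.Theory.
Local Open Scope ring_scope.

Section WGraph.
Variables (R : realType) (V : eqType).

(* A locally finite weighted graph on vertex type V: [nbr x] is the (finite)
   list of neighbours of x, [w x y] the weight of the edge xy. *)
Definition is_lf_wgraph (nbr : V -> seq V) (w : V -> V -> R) : Prop :=
  [/\ forall x, uniq (nbr x),
      forall x, x \notin nbr x,
      forall x y, (y \in nbr x) = (x \in nbr y)
    & forall x y, y \in nbr x -> w x y = w y x /\ 0 < w x y].

Definition vertex_transitive (nbr : V -> seq V) (w : V -> V -> R) : Prop :=
  forall u v, exists phi : V -> V,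
    [/\ bijective phi, phi u = v,
        forall x y, (phi y \in nbr (phi x)) = (y \in nbr x)
      & forall x y, y \in nbr x -> w (phi x) (phi y) = w x y].

Definition deg (nbr : V -> seq V) (w : V -> V -> R) (x : V) : R :=
  \sum_(y <- nbr x) w x y.

Definition pstep (nbr : V -> seq V) (w : V -> V -> R) (z y : V) : R :=
  w z y / deg nbr w z.

(* hitp A B n z = P_z[ the walk is in A at time n, not in A at times < n,
                       and not in B at times 0..n ]  *)
Fixpoint hitp (nbr : V -> seq V) (w : V -> V -> R) (A B : pred V) (n : nat)
  (z : V) : R :=
  match n with
  | 0 => ((z \in A) && (z \notin B))%:R
  | n'.+1 => if (z \in A) || (z \in B) then 0
             else \sum_(y <- nbr z) pstep nbr w z y * hitp nbr w A B n' y
  end.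

(* P_g[T_x < oo] *)
Definition Phit nbr w (g x : V) : R :=
  \big[+%R/0%R]_(0 <= n <oo) hitp nbr w (pred1 x) pred0 n g.

(* P_g[T_x < T_y]  (the event includes T_x < oo) *)
Definition Pbefore nbr w (g x y : V) : R :=
  \big[+%R/0%R]_(0 <= n <oo) hitp nbr w (pred1 x) (pred1 y) n g.

(* P_g[min(T_x, T_y) < oo] = P_g[T_{x,y} < oo] *)
Definition Pmin nbr w (g x y : V) : R :=
  \big[+%R/0%R]_(0 <= n <oo) hitp nbr w (pred2 x y) pred0 n g.

(* P_g[T_x < T_y | min(T_x,T_y) < oo]; since {T_x < T_y} is contained in
   {min(T_x,T_y) < oo}, the intersection is {T_x < T_y}. *)
Definition Pcond nbr w (g x y : V) : R :=
  Pbefore nbr w g x y / Pmin nbr w g x y.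

(* probability of ever returning to g at a time t >= 1:
   sum over n of P_g[first return at time n+1] *)
Definition Preturn nbr w (g : V) : R :=
  \big[+%R/0%R]_(0 <= n <oo) \sum_(y <- nbr g) pstep nbr w g y * hitp nbr w (pred1 g) pred0 n y.

Definition transient nbr w (g : V) : Prop := Preturn nbr w g < 1.

End WGraph.

(* Main.v *)
Require Import Defs.
From mathcomp Require Import all_boot all_order all_algebra.
From mathcomp Require Import all_classical all_reals all_analysis.
From mathcomp Require Import zify ring lra.
Set Implicit Arguments. Unset Strict Implicit. Unset Printing Implicit Defensive.
Import Order.TTheory GRing.Theory Num.Theory.
Local Open Scope classical_set_scope.
Local Open Scope ring_scope.

Section Series.
Variable R : realType.
Implicit Types f g : nat -> R.
Definition psum f N := \sum_(0 <= n < N) f n.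
Definition S f := limn (psum f).
Definition summable f := (forall n, 0 <= f n) /\ exists M, forall N, psum f N <= M.

Lemma psumS f N : psum f N.+1 = psum f N + f N.
Proof. by rewrite /psum big_nat_recr. Qed.

Lemma psum_nd f : (forall n, 0 <= f n) -> {homo psum f : n m / (n <= m)%N >-> n <= m}.
Proof.
move=> f0 m n mn; rewrite /psum (big_cat_nat (leq0n m) mn) /= lerDl.
by apply: sumr_ge0 => i _.
Qed.

Lemma summable_cvg f : summable f -> psum f @ \oo --> S f.
Proof.
case=> f0 [M hM]; have : cvgn (psum f).
  apply: nondecreasing_is_cvgn; first exact: psum_nd.
  by exists M => _ [n _ <-].
by [].
Qed.

Lemma psum_le_S f N : summable f -> psum f N <= S f.
Proof.
move=> sf; apply: nondecreasing_cvgn_le; first exact: psum_nd (proj1 sf).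
exact: (cvgP _ (summable_cvg sf)).
Qed.

Lemma S_le f M : summable f -> (forall N, psum f N <= M) -> S f <= M.
Proof.
move=> sf hM; apply: limr_le; first exact: (cvgP _ (summable_cvg sf)).
by apply: nearW.
Qed.

Lemma S_ge0 f : summable f -> 0 <= S f.
Proof. by move=> sf; apply: le_trans (psum_le_S 0 sf); rewrite /psum big_geq. Qed.

Lemma summableD f g : summable f -> summable g -> summable (fun n => f n + g n).
Proof.
move=> [f0 [M hM]] [g0 [K hK]]; split; first by move=> n; exact: addr_ge0.
exists (M + K) => N; rewrite /psum big_split /=; exact: lerD (hM N) (hK N).
Qed.

Lemma summableZ c f : 0 <= c -> summable f -> summable (fun n => c * f n).
Proof.
move=> c0 [f0 [M hM]]; split; first by move=> n; exact: mulr_ge0.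
exists (c * M) => N; rewrite /psum -big_distrr /=; by rewrite ler_wpM2l //; exact: hM.
Qed.

Lemma summable_le f g : (forall n, 0 <= f n <= g n) -> summable g -> summable f.
Proof.
move=> fg [g0 [M hM]]; split; first by move=> n; case/andP: (fg n).
exists M => N; apply: le_trans (hM N); rewrite /psum; apply: ler_sum => i _.
by case/andP: (fg i).
Qed.

Lemma SD f g : summable f -> summable g -> S (fun n => f n + g n) = S f + S g.
Proof.
move=> sf sg; apply: cvg_lim => //.
have -> : psum (fun n => f n + g n) = psum f + psum g.
  by apply/funext => N; rewrite /psum big_split.
exact: cvgD (summable_cvg sf) (summable_cvg sg).
Qed.

Lemma SZ c f : summable f -> S (fun n => c * f n) = c * S f.
Proof.
move=> sf; apply: cvg_lim => //.
have -> : psum (fun n => c * f n) = (fun N => c * psum f N).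
  by apply/funext => N; rewrite /psum big_distrr.
exact: cvgMr (summable_cvg sf).
Qed.

Lemma S_mono f g : (forall n, 0 <= f n <= g n) -> summable g -> S f <= S g.
Proof.
move=> fg sg; have sf := summable_le fg sg.
apply: S_le => // N; apply: le_trans (psum_le_S N sg).
rewrite /psum; apply: ler_sum => i _; by case/andP: (fg i).
Qed.

Lemma S_shift f : summable f -> S (fun n => f n.+1) = S f - f 0%N.
Proof.
move=> sf; apply: cvg_lim => //.
have -> : psum (fun n => f n.+1) = (fun N => psum f N.+1 - f 0%N).
  by apply/funext => N; rewrite /psum big_nat_recl // [f 0%N + _]addrC addrK.
have h1 : (fun N => psum f N.+1) @ \oo --> S f.
  have := summable_cvg sf; by rewrite -(cvg_shiftS (psum f)).
have h2 := cvgB h1 (@cvg_cst R^o (f 0%N) _ _ _).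
exact: h2.
Qed.

Lemma S_ext f g : (forall n, f n = g n) -> S f = S g.
Proof. by move=> e; congr S; apply/funext. Qed.

Lemma cvg_list (T : Type) (s : seq T) (c : T -> R) (F : T -> nat -> R) (l : T -> R) :
  (forall t, psum (F t) @ \oo --> (l t : R^o)) ->
  psum (fun n => \sum_(t <- s) c t * F t n) @ \oo --> (\sum_(t <- s) c t * l t : R^o).
Proof.
move=> hF; elim: s => [|t s IH].
  rewrite big_nil.
  have -> : psum (fun n => \sum_(t <- [::]) c t * F t n) = fun=> 0.
    by apply/funext => N; rewrite /psum big1 // => i _; rewrite big_nil.
  exact: (@cvg_cst R^o).
rewrite big_cons.
have -> : psum (fun n => \sum_(t0 <- t :: s) c t0 * F t0 n) =
   (fun N => c t * psum (F t) N + psum (fun n => \sum_(t0 <- s) c t0 * F t0 n) N).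
  apply/funext => N; rewrite /psum.
  under eq_bigr do rewrite big_cons.
  by rewrite big_split /= big_distrr.
have h1 : (fun N => c t * psum (F t) N) @ \oo --> (c t * l t : R^o) by apply: cvgMr; exact: hF.
have h2 := cvgD h1 IH.
exact: h2.
Qed.

Lemma S_list (T : Type) (s : seq T) (c : T -> R) (F : T -> nat -> R) :
  (forall t, summable (F t)) ->
  S (fun n => \sum_(t <- s) c t * F t n) = \sum_(t <- s) c t * S (F t).
Proof.
move=> sF; apply: cvg_lim => //; apply: cvg_list => t; exact: summable_cvg.
Qed.

Definition conv a g n := \sum_(0 <= k < n.+1) a k * g (n - k)%N.

Lemma conv_psum a g N :
  psum (conv a g) N = \sum_(0 <= k < N) a k * psum g (N - k)%N.
Proof.
elim: N => [|N IH]; first by rewrite /psum !big_geq.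
rewrite psumS IH /conv [in RHS]big_nat_recr //= [X in _ + X]big_nat_recr //=.
rewrite addrA -big_split /=; congr (_ + _).
  apply: eq_big_nat => k /andP [_ kN].
  by rewrite subSn ?(ltnW kN) // psumS mulrDr.
by rewrite subSnn subnn /psum big_nat1.
Qed.

Lemma S_conv a g : summable a -> summable g ->
  summable (conv a g) /\ S (conv a g) = S a * S g.
Proof.
move=> sa sg; have [a0 _] := sa; have [g0 _] := sg.
have c0 : forall n, 0 <= conv a g n.
  by move=> n; apply: sumr_ge0 => k _; apply: mulr_ge0.
have up : forall N, psum (conv a g) N <= psum a N * psum g N.
  move=> N; rewrite conv_psum /psum big_distrl /=; apply: ler_sum_nat => k /andP [_ kN].
  apply: ler_wpM2l => //; apply: (psum_nd g0); exact: leq_subr.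
have up2 : forall N, psum (conv a g) N <= S a * S g.
  move=> N; apply: le_trans (up N) _; apply: ler_pM.
  - by apply: sumr_ge0.
  - by apply: sumr_ge0.
  - exact: psum_le_S.
  - exact: psum_le_S.
have sc : summable (conv a g) by split => //; exists (S a * S g).
split => //; apply/eqP; rewrite eq_le; apply/andP; split; first exact: S_le.
have lo : forall N, psum a N * psum g N <= S (conv a g).
  move=> N; apply: le_trans (psum_le_S (N + N)%N sc); rewrite conv_psum.
  rewrite /psum big_distrl /= (big_cat_nat (leq0n N) (leq_addr N N)) /= -[X in X <= _]addr0.
  apply: lerD; last by apply: sumr_ge0 => k _; apply: mulr_ge0 => //; apply: sumr_ge0.
  apply: ler_sum_nat => k /andP [_ kN]; apply: ler_wpM2l => //.
  apply: (psum_nd g0); lia.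
pose q : nat -> R^o := fun N => psum a N * psum g N.
have hM : q @ \oo --> (S a * S g : R^o).
  by apply: cvgM; exact: summable_cvg.
have e : limn q = S a * S g by apply: cvg_lim.
rewrite -e; apply: limr_le; first exact: (cvgP _ hM).
by apply: nearW => N; exact: lo.
Qed.

Lemma S0 : S (fun=> 0) = 0.
Proof.
apply: cvg_lim => //.
have -> : psum (fun=> (0 : R)) = fun=> 0 by apply/funext => N; rewrite /psum big1.
exact: (@cvg_cst R^o).
Qed.
End Series.

Section Graph.
Variables (R : realType) (V : eqType) (nbr : V -> seq V) (w : V -> V -> R).
Hypothesis Hlf : is_lf_wgraph nbr w.
Hypothesis Hvt : vertex_transitive nbr w.

Local Notation hit := (hitp nbr w).
Local Notation ps := (pstep nbr w).
Local Notation dg := (deg nbr w).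

Lemma w_pos z y : y \in nbr z -> 0 < w z y.
Proof. by case: Hlf => _ _ _ h /h []. Qed.
Lemma w_sym z y : y \in nbr z -> w z y = w y z.
Proof. by case: Hlf => _ _ _ h /h []. Qed.
Lemma deg_ge0 z : 0 <= dg z.
Proof. rewrite /deg big_seq; apply: sumr_ge0 => y /w_pos /ltW; done. Qed.
Lemma ps_ge0 z y : y \in nbr z -> 0 <= ps z y.
Proof. by move=> /w_pos h; rewrite /pstep; apply: divr_ge0; [exact: ltW | exact: deg_ge0]. Qed.
Lemma sum_ps z : \sum_(y <- nbr z) ps z y <= 1.
Proof.
rewrite /pstep -big_distrl /=; change (dg z / dg z <= 1).
have [->|d0] := eqVneq (dg z) 0; first by rewrite mul0r.
by rewrite mulfV.
Qed.

Lemma hit_ge0 A B n z : 0 <= hit A B n z.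
Proof.
elim: n z => [|n IH] z /=; first by rewrite ler0n.
case: ifP => _ //; rewrite big_seq; apply: sumr_ge0 => y yn.
by rewrite mulr_ge0 ?ps_ge0 ?IH.
Qed.

Lemma hitS A B n z : hit A B n.+1 z =
  if (z \in A) || (z \in B) then 0 else \sum_(y <- nbr z) ps z y * hit A B n y.
Proof. by []. Qed.

Lemma hit_psum A B N z : psum (fun n => hit A B n z) N <= 1.
Proof.
elim: N z => [|N IH] z; first by rewrite /psum big_geq.
rewrite /psum big_nat_recl // [hit A B 0 z]/=.
case hz: ((z \in A) || (z \in B)).
- rewrite big1 ?addr0; last by move=> i _; rewrite hitS hz.
  by rewrite lern1 leq_b1.
- have -> : (z \in A) && (z \notin B) = false.
    by move/negbT: hz; rewrite negb_or => /andP[/negbTE-> _].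
  rewrite add0r.
  under eq_bigr do rewrite hitS hz /=.
  rewrite exchange_big /=; apply: le_trans (sum_ps z).
  rewrite big_seq [X in _ <= X]big_seq; apply: ler_sum => y yn.
  rewrite -big_distrr /= -[X in _ <= X]mulr1; apply: ler_wpM2l; first exact: ps_ge0.
  exact: IH.
Qed.

Lemma summable_hit A B z : summable (fun n => hit A B n z).
Proof. split; first by move=> n; exact: hit_ge0. by exists 1 => N; exact: hit_psum. Qed.

Lemma S_hit_le1 A B z : S (fun n => hit A B n z) <= 1.
Proof. apply: S_le; [exact: summable_hit | move=> N; exact: hit_psum]. Qed.

Section Auto.
Variable phi : V -> V.
Hypotheses (hb : bijective phi) (hn : forall x y, (phi y \in nbr (phi x)) = (y \in nbr x))
  (hw : forall x y, y \in nbr x -> w (phi x) (phi y) = w x y).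

Lemma perm_nbr z : perm_eq (nbr (phi z)) (map phi (nbr z)).
Proof.
case: Hlf => hu _ _ _; have [psi h1 h2] := hb.
apply: uniq_perm; first exact: hu.
  rewrite map_inj_uniq ?hu //; exact: can_inj h1.
move=> t; have -> : t = phi (psi t) by rewrite h2.
by rewrite hn mem_map //; exact: can_inj h1.
Qed.

Lemma deg_phi z : dg (phi z) = dg z.
Proof.
rewrite /deg (perm_big _ (perm_nbr z)) big_map big_seq [RHS]big_seq.
by apply: eq_bigr => t tn; exact: hw.
Qed.

Lemma sum_phi z (F : V -> R) :
  \sum_(t <- nbr (phi z)) ps (phi z) t * F t = \sum_(t <- nbr z) ps z t * F (phi t).
Proof.
rewrite (perm_big _ (perm_nbr z)) big_map big_seq [RHS]big_seq.
by apply: eq_bigr => t tn; rewrite /pstep hw // deg_phi.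
Qed.

Lemma hit_phi A B A' B' : (forall v, (phi v \in A) = (v \in A')) ->
  (forall v, (phi v \in B) = (v \in B')) ->
  forall n z, hit A B n (phi z) = hit A' B' n z.
Proof.
move=> hA hB; elim=> [|n IH] z; first by rewrite /= hA hB.
rewrite !hitS hA hB; case: ifP => // _.
by rewrite sum_phi; apply: eq_bigr => t _; rewrite IH.
Qed.
End Auto.

Lemma deg_const u v : dg u = dg v.
Proof. have [phi [hb e hn hw]] := Hvt v u; by rewrite -e deg_phi. Qed.

Lemma ps_sym z t : t \in nbr z -> ps z t = ps t z.
Proof. by move=> tn; rewrite /pstep w_sym // (deg_const z t). Qed.

Fixpoint pn n u v : R :=
  if n is n'.+1 then \sum_(t <- nbr u) ps u t * pn n' t v else (u == v)%:R.

Lemma sum_delta (s : seq V) (F : V -> R) v : uniq s ->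
  \sum_(t <- s) F t * (t == v)%:R = (v \in s)%:R * F v.
Proof.
elim: s => [|x s IH]; first by rewrite big_nil mul0r.
rewrite /= => /andP [xs us]; rewrite big_cons IH // in_cons.
case: (eqVneq x v) => [<-|xv]; last by rewrite mulr0 add0r.
by rewrite (negbTE xs) /= mulr1 mul0r addr0 mul1r.
Qed.

Lemma pn_last n u v : pn n.+1 u v = \sum_(t <- nbr v) pn n u t * ps t v.
Proof.
case: Hlf => hu _ hs _.
elim: n u => [|n IH] u.
  rewrite /= sum_delta //.
  under eq_bigr do rewrite eq_sym mulrC.
  by rewrite sum_delta // hs.
transitivity (\sum_(t <- nbr u) ps u t * \sum_(s <- nbr v) pn n t s * ps s v).
  by apply: eq_bigr => t _; congr (_ * _); exact: IH.
under eq_bigr do rewrite big_distrr.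
rewrite exchange_big /=; apply: eq_bigr => s _; rewrite big_distrl /=.
by apply: eq_bigr => t _; rewrite mulrA.
Qed.

Lemma pn_sym n u v : pn n u v = pn n v u.
Proof.
elim: n u v => [|n IH] u v; first by rewrite /= eq_sym.
rewrite [RHS]pn_last /= big_seq [RHS]big_seq; apply: eq_bigr => t tn.
by rewrite IH ps_sym // mulrC.
Qed.

Lemma pn_diag n u v : pn n u u = pn n v v.
Proof.
have [phi [hb e hn hw]] := Hvt u v; rewrite -e.
have inj := bij_inj hb.
suff H : forall a b, pn n (phi a) (phi b) = pn n a b by rewrite H.
elim: n => [|n IH] a b; first by rewrite /= (inj_eq inj).
rewrite /= (sum_phi hb hn hw); apply: eq_bigr => t _; by rewrite IH.
Qed.

Lemma fp n u v :
  pn n u v = \sum_(0 <= k < n.+1) hit (pred1 v) pred0 k u * pn (n - k) v v.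
Proof.
elim: n u => [|n IH] u.
  by rewrite big_nat1 /= !inE eqxx mulr1 andbT.
case: (eqVneq u v) => [->|uv].
  rewrite big_nat_recl // big1 ?addr0; last by move=> i _ /=; rewrite !inE eqxx /= mul0r.
  by rewrite /= !inE eqxx /= mul1r.
rewrite [RHS]big_nat_recl // [hit _ _ 0 u]/= !inE (negbTE uv) /= mul0r add0r.
have hu : (u \in pred1 v) || (u \in pred0) = false by rewrite !inE (negbTE uv).
under [RHS]eq_bigr do rewrite hu /= subSS big_distrl /=.
rewrite exchange_big /=; apply: eq_bigr => t _.
rewrite IH big_distrr /=; apply: eq_bigr => k _; by rewrite mulrA.
Qed.

Lemma f_sym n u v : hit (pred1 v) pred0 n u = hit (pred1 u) pred0 n v.
Proof.
elim/ltn_ind: n => n IH.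
have := fp n u v; rewrite pn_sym fp.
under eq_bigr do rewrite (pn_diag _ u v).
rewrite !big_nat_recr //= subnn /= !eqxx /= !mulr1.
have -> : \sum_(0 <= i < n) hit (pred1 u) pred0 i v * pn (n - i) v v =
          \sum_(0 <= i < n) hit (pred1 v) pred0 i u * pn (n - i) v v.
  by apply: eq_big_nat => i /andP [_ ilt]; rewrite IH.
by move/addrI.
Qed.

Lemma hit_inB A B k z : z \in B -> hit A B k z = 0.
Proof. by case: k => [|k] zB /=; rewrite zB ?andbF ?orbT. Qed.

Lemma hit_inA A B k z : z \in A -> hit A B k.+1 z = 0.
Proof. by move=> zA /=; rewrite zA. Qed.

Lemma hit_xx x n z : hit (pred1 x) (pred1 x) n z = 0.
Proof.
elim: n z => [|n IH] z; first by rewrite /= andbN.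
rewrite hitS; case: ifP => // _; rewrite big1 // => t _; by rewrite IH mulr0.
Qed.

Section TwoPoints.
Variables x y : V.
Hypothesis xy : x != y.

Lemma D1 n z : hit (pred2 x y) pred0 n z =
  hit (pred1 x) (pred1 y) n z + hit (pred1 y) (pred1 x) n z.
Proof.
elim: n z => [|n IH] z.
  rewrite /= !inE /=; case: (eqVneq z x) => [->|zx]; first by rewrite -natrD xy andbF.
  by rewrite -natrD /= andbT.
rewrite !hitS !inE /= orbF [(z == y) || _]orbC.
case: ifP => _; first by rewrite addr0.
by rewrite -big_split /=; apply: eq_bigr => t _; rewrite IH mulrDr.
Qed.

Lemma D2 n z : hit (pred1 x) pred0 n z = hit (pred1 x) (pred1 y) n z +
  \sum_(0 <= k < n.+1) hit (pred1 y) (pred1 x) k z * hit (pred1 x) pred0 (n - k) y.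
Proof.
elim: n z => [|n IH] z.
  rewrite big_nat1 /= !inE /= [y == x]eq_sym (negbTE xy) /= mulr0 addr0.
  by case: (eqVneq z x) => [->|zx]; rewrite ?xy.
case: (eqVneq z x) => [->|zx].
  rewrite hit_inA ?inE // hit_inA ?inE // add0r big1 // => k _.
  by rewrite hit_inB ?inE // mul0r.
case: (eqVneq z y) => [->|zy].
  rewrite (@hit_inB (pred1 x) (pred1 y)) ?inE // add0r big_nat_recl // big1 ?addr0.
    by rewrite /= !inE eqxx eq_sym (negbTE xy) /= mul1r.
  by move=> k _; rewrite hit_inA ?inE // mul0r.
have hz : (z \in pred1 x) || (z \in pred0) = false by rewrite !inE (negbTE zx).
have hz' : (z \in pred1 x) || (z \in pred1 y) = false by rewrite !inE (negbTE zx) (negbTE zy).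
have hz'' : (z \in pred1 y) || (z \in pred1 x) = false by rewrite orbC.
rewrite hitS hz hitS hz' big_nat_recl // [hit _ _ 0 z]/= !inE (negbTE zy) /= mul0r add0r.
under [X in _ = _ + X]eq_bigr do rewrite hz'' /= subSS big_distrl /=.
rewrite exchange_big /= -big_split /=; apply: eq_bigr => t _.
rewrite IH mulrDr big_distrr /=; congr (_ + _); apply: eq_bigr => k _; by rewrite mulrA.
Qed.

Definition Ph u v := S (fun n => hit (pred1 v) pred0 n u).
Definition Pb u a b := S (fun n => hit (pred1 a) (pred1 b) n u).

Lemma Ph_sym u v : Ph u v = Ph v u.
Proof. by apply: S_ext => n; rewrite f_sym. Qed.

Lemma markov z : Ph z x = Pb z x y + Pb z y x * Ph y x.
Proof.
rewrite /Ph (S_ext (D2 ^~ z)).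
have [sc ec] := S_conv (summable_hit (pred1 y) (pred1 x) z) (summable_hit (pred1 x) pred0 y).
by rewrite (SD (summable_hit _ _ _) sc) ec.
Qed.

Lemma Pmin_split z : S (fun n => hit (pred2 x y) pred0 n z) = Pb z x y + Pb z y x.
Proof. by rewrite (S_ext (D1 ^~ z)) SD //; exact: summable_hit. Qed.
End TwoPoints.

Lemma t2 g : Preturn nbr w g = S (fun n => \sum_(t <- nbr g) pstep nbr w g t * hitp nbr w (pred1 g) pred0 n t).
Proof. reflexivity. Qed.
Lemma Preturn_eq g : Preturn nbr w g = \sum_(t <- nbr g) ps g t * Ph t g.
Proof.
rewrite t2.
by apply: S_list => t; exact: summable_hit.
Qed.

Lemma Preturn_inv u v : Preturn nbr w u = Preturn nbr w v.
Proof.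
have [phi [hb e hn hw]] := Hvt u v; rewrite -e.
have inj := bij_inj hb.
rewrite !t2.
apply: S_ext => n; rewrite (sum_phi hb hn hw); apply: eq_bigr => t _.
congr (_ * _); symmetry; apply: (hit_phi hb hn hw) => a; by rewrite ?inE ?(inj_eq inj).
Qed.

Lemma Ph_step u v : u != v -> Ph u v = \sum_(t <- nbr u) ps u t * Ph t v.
Proof.
move=> uv; rewrite /Ph.
have e := S_shift (summable_hit (pred1 v) pred0 u).
have h0 : hit (pred1 v) pred0 0 u = 0 by rewrite /= !inE (negbTE uv).
rewrite h0 subr0 in e; rewrite -e.
have hu : (u \in pred1 v) || (u \in pred0) = false by rewrite !inE (negbTE uv).
rewrite (S_ext (fun n => hitS (pred1 v) pred0 n u)) hu /=.
by apply: S_list => t; exact: summable_hit.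
Qed.

Lemma Ph_ge0 u v : 0 <= Ph u v.
Proof. exact/S_ge0/summable_hit. Qed.
Lemma Ph_le1 u v : Ph u v <= 1.
Proof. exact: S_hit_le1. Qed.
Lemma Pb_ge0 u a b : 0 <= Pb u a b.
Proof. exact/S_ge0/summable_hit. Qed.

Lemma ret_bound x y : x != y -> Ph x y ^+ 2 <= Preturn nbr w x.
Proof.
move=> xy; rewrite Preturn_eq expr2 {2}(Ph_step xy) big_distrr /=.
rewrite big_seq [X in _ <= X]big_seq; apply: ler_sum => t tn.
rewrite mulrCA; apply: ler_wpM2l; first exact: ps_ge0.
rewrite (markov xy t) (markov (y:=x) _ t); last by rewrite eq_sym.
rewrite (Ph_sym y x).
have a0 := Pb_ge0 t x y; have b0 := Pb_ge0 t y x.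
have h0 := Ph_ge0 x y; have h1 := Ph_le1 x y.
set a := Pb t x y in a0 *; set b := Pb t y x in b0 *; set h := Ph x y in h0 h1 *.
have k : 0 <= a * ((1 - h) * (1 + h)).
  by apply: mulr_ge0 => //; apply: mulr_ge0; lra.
nra.
Qed.
End Graph.

Theorem lemma6p5 (R : realType) (V : eqType) (nbr : V -> seq V)
  (w : V -> V -> R) (e x y : V) :
  is_lf_wgraph nbr w -> vertex_transitive nbr w ->
  (Phit nbr w e y < Phit nbr w e x -> 2^-1 < Pcond nbr w e x y) /\
  (transient nbr w e ->
     (Phit nbr w e y < Phit nbr w e x <-> 2^-1 < Pcond nbr w e x y)).
Proof.
move=> Hlf Hvt.
have ePh : forall g v, Phit nbr w g v = Ph nbr w g v by [].
have ePb : forall g a b, Pbefore nbr w g a b = Pb nbr w g a b by [].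
have ePm : Pmin nbr w e x y = S (fun n => hitp nbr w (pred2 x y) pred0 n e) by [].
rewrite /Pcond ePm !ePh ePb.
case: (eqVneq x y) => [<-|xy].
  have z : Pb nbr w e x x = 0.
    by rewrite /Pb (S_ext (fun n => @hit_xx _ _ nbr w x n e)) S0.
  rewrite z mul0r ltxx; split => //; split => //; lra.
rewrite (Pmin_split Hlf xy) (markov Hlf xy e) (markov Hlf (y:=x) _ e); last by rewrite eq_sym.
rewrite (Ph_sym Hlf Hvt y x).
have a0 := Pb_ge0 Hlf e x y; have b0 := Pb_ge0 Hlf e y x.
have h0 := Ph_ge0 Hlf x y; have h1 := Ph_le1 Hlf x y.
have hr : transient nbr w e -> Ph nbr w x y < 1.
  rewrite /transient => tr.
  have := ret_bound Hlf Hvt xy; rewrite (Preturn_inv Hlf Hvt x e) => hb.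
  nra.
set a := Pb nbr w e x y in a0 *; set b := Pb nbr w e y x in b0 *.
set h := Ph nbr w x y in h0 h1 hr *.
have P1 : b + a * h < a + b * h -> 2^-1 < a / (a + b).
  move=> lt; have ba : b < a by nra.
  rewrite ltr_pdivlMr; [lra | lra].
split => // /hr hlt; split => // lt.
case: (eqVneq (a + b) 0) => [ab0|ab0].
  by move: lt; rewrite ab0 invr0 mulr0; lra.
have abp : 0 < a + b by rewrite lt_neqAle eq_sym ab0 /=; lra.
rewrite ltr_pdivlMr // in lt.
have ba : b < a by lra.
nra.
Qed.
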